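(* Let $\mathcal{C}_W$, $R=\mathrm{Spec}(C^\infty(\mathbb{R}))$ and $H=\mathrm{Spec}(C^\infty[0,\infty))$ be as in the context, with the monomorphism $H\rightarrowtail R$ induced by the quotient $C^\infty(\mathbb{R})\to C^\infty[0,\infty)$, and let $\Gamma=\mathcal{C}_W(\mathbf{1},-):\mathcal{C}_W\to\mathbf{Set}$ be the points functor, so that $\Gamma R=\mathbb{R}$ and $\Gamma H=[0,\infty)$. Then for every morphism $v:X\to R$ in $\mathcal{C}_W$, $v$ factors through $H\rightarrowtail R$ if and only if $\Gamma v:\Gamma X\to\Gamma R=\mathbb{R}$ factors through $[0,\infty)\subseteq\mathbb{R}$.
   Context: A $C^\infty$-ring is a model of the algebraic theory whose $n$-ary operations are the smooth functions $\mathbb{R}^n\to\mathbb{R}$. $\mathrm{Aff}_{C^\infty}$ is the opposite of the category of finitely generated $C^\infty$-rings, with $\mathrm{Spec}\,A$ denoting $A$ as an object there; its terminal object is $\mathbf{1}=\mathrm{Spec}\,\mathbb{R}$, so points of $\mathrm{Spec}\,A$ are $C^\infty$-homomorphisms $A\to\mathbb{R}$. $\mathcal{C}$ is the full subcategory of objects $\mathrm{Spec}\,A$ with $A$ having exactly two idempotents and at least one point. A Weil algebra is a finite-dimensional $\mathbb{R}$-algebra $\mathbb{R}\oplus N$ with $N$ nilpotent. A $C^\infty$-ring $A$ is W-determined if the family of all $C^\infty$-homomorphisms $A\to W$ with $W$ a Weil algebra is jointly monic. $\mathcal{C}_W$ is the full subcategory of $\mathcal{C}$ of the $\mathrm{Spec}\,A$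 with $A$ W-determined. $C^\infty[0,\infty)=C^\infty(\mathbb{R})/I$ with $I$ the ideal of smooth functions vanishing on $[0,\infty)$; $H$ is an object of $\mathcal{C}_W$. *)

(* Defs.v *)
From HB Require Import structures.
From mathcomp Require Import all_boot all_order all_algebra.
From mathcomp Require Import all_classical all_reals all_analysis.
From mathcomp Require Import Rstruct Rstruct_topology.

Set Implicit Arguments. Unset Strict Implicit. Unset Printing Implicit Defensive.
Import Order.TTheory GRing.Theory Num.Theory.
Import numFieldNormedType.Exports.
Local Open Scope ring_scope.

Notation RR := Rdefinitions.R.

Fixpoint Dseq (n : nat) (vs : seq 'rV[RR]_n) (f : 'rV[RR]_n -> RR) : 'rV[RR]_n -> RR :=
  match vs with
  | [::] => f
  | v :: vs' => fun x => derive (Dseq vs' f : 'rV[RR]_n -> RR^o) x v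
  end.

Definition smooth (n : nat) (f : 'rV[RR]_n -> RR) : Prop :=
  forall vs : seq 'rV[RR]_n,
    continuous (Dseq vs f : 'rV[RR]_n -> RR^o) /\ forall v x, derivable (Dseq vs f : 'rV[RR]_n -> RR^o) x v.

(* C^infinity-rings: models of the Lawvere theory whose n-ary operations are
   the smooth maps R^n -> R (operations on non-smooth maps are junk and are
   never used). *)
Record CinfRing := {
  cr_car :> Type;
  cr_op : forall n : nat, ('rV[RR]_n -> RR) -> ('I_n -> cr_car) -> cr_car;
  cr_proj : forall n (i : 'I_n) (xs : 'I_n -> cr_car),
      cr_op (fun x => x ord0 i) xs = xs i;
  cr_comp : forall n m (f : 'rV[RR]_n -> RR) (g : 'I_n -> 'rV[RR]_m -> RR)
      (xs : 'I_m -> cr_car),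
      smooth f -> (forall j, smooth (g j)) ->
      cr_op (fun x => f (\row_j g j x)) xs = cr_op f (fun j => cr_op (g j) xs)
}.

Definition is_cinf_hom (A B : CinfRing) (phi : A -> B) : Prop :=
  forall n (f : 'rV[RR]_n -> RR) (xs : 'I_n -> A),
    smooth f -> phi (cr_op f xs) = cr_op f (fun i => phi (xs i)).

Definition Rcinf : CinfRing.
Proof.
refine (@Build_CinfRing RR (fun n f xs => f (\row_i xs i)) _ _).
- by move=> n i xs; rewrite mxE.
- by [].
Defined.

Section Ops.
Variable A : CinfRing.
Definition noargs : 'I_0 -> A :=
  fun i => False_rect _ (Bool.diff_false_true (etrans (esym (ltn0 i)) (ltn_ord i))).
Definition zeroA : A := cr_op (fun _ : 'rV[RR]_0 => 0) noargs.
Definition mulA (x y : A) : A :=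
  cr_op (fun v : 'rV[RR]_2 => v ord0 ord0 * v ord0 (lift ord0 ord0))
        (fun i : 'I_2 => if i == ord0 then x else y).
Definition prodA (m : nat) (xs : 'I_m -> A) : A :=
  cr_op (fun v : 'rV[RR]_m => \prod_(i < m) v ord0 i) xs.
Definition idempotent (e : A) : Prop := mulA e e = e.

Definition is_point (p : A -> RR) : Prop := @is_cinf_hom A Rcinf p.

Definition fin_gen : Prop :=
  exists n (g : 'I_n -> A), forall x : A,
    exists f : 'rV[RR]_n -> RR, smooth f /\ x = cr_op f g.

Definition exactly_two_idempotents : Prop :=
  exists e1 e2 : A, e1 <> e2 /\ forall e, idempotent e <-> (e = e1 \/ e = e2).
End Ops.

(* Weil algebra: finite-dimensional R-algebra R (+) N with N a nilpotent ideal
   (N = kernel of the augmentation eps), endowed with its (unique)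
   C^infinity-ring structure. *)
Definition is_weil (B : CinfRing) : Prop :=
  (exists k (b : 'I_k -> B), forall x : B,
      exists lam : 'I_k -> RR,
        x = cr_op (fun v : 'rV[RR]_k => \sum_(i < k) lam i * v ord0 i) b) /\
  (exists eps : B -> RR, is_point eps /\
     exists m : nat, forall xs : 'I_m -> B,
       (forall i, eps (xs i) = 0) -> prodA xs = zeroA B).

Definition W_determined (A : CinfRing) : Prop :=
  forall x y : A,
    (forall (W : CinfRing) (phi : A -> W), is_weil W -> is_cinf_hom phi ->
       phi x = phi y) -> x = y.

(* Spec A is an object of C_W *)
Definition in_CW (A : CinfRing) : Prop :=
  fin_gen A /\ exactly_two_idempotents A /\ (exists p, @is_point A p) /\
  W_determined A.

(* Main.v *)
Require Import Defs.
From mathcomp Require Import all_boot all_order all_algebra.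
From mathcomp Require Import all_classical all_reals all_analysis.
From mathcomp Require Import Rstruct Rstruct_topology.
From mathcomp Require Import ring lra.
Import Order.TTheory GRing.Theory Num.Theory.
Import numFieldNormedType.Exports.
Local Open Scope classical_set_scope.
Local Open Scope ring_scope.
Set Implicit Arguments. Unset Strict Implicit. Unset Printing Implicit Defensive.

Section OneD.
Variable R : realType.
Implicit Types (g f : R -> R) (t : R).

Definition dseq (d : nat -> R -> R) := forall k (x : R), is_derive x 1 (d k) (d k.+1 x).
Definition Dn (n : nat) g t : R := if t < 0 then g t / t ^+ n else 0.
Definition flat g := forall (N : nat) (e : R), 0 < e ->
  exists2 dl : R, 0 < dl & forall h, - dl < h -> h < 0 -> `|g h| <= e * `|h| ^+ N.

Lemma Dn_neg n g t : t < 0 -> Dn n g t = g t / t ^+ n.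
Proof. by rewrite /Dn => ->. Qed.
Lemma Dn_nneg n g t : 0 <= t -> Dn n g t = 0.
Proof. by rewrite /Dn ltNge => ->. Qed.

Lemma K_neg g g' n t : t < 0 -> is_derive t 1 g (g' t) ->
  is_derive t 1 (Dn n g) (Dn n g' t - n%:R * Dn n.+1 g t).
Proof.
move=> t0 dg.
have tn0 : t != 0 by rewrite ltr0_neq0.
have dX := @is_deriveX _ _ (@idfun R) n t 1 1 (is_derive_id _ _).
have := @is_deriveV _ (idfun ^+ n) t _ 1 _ dX.
have tn : (idfun ^+ n) t != 0 :> R by rewrite exprfctE expf_neq0.
move=> /(_ tn) dV.
have dM := is_deriveM dg dV.
apply: (near_eq_is_derive _ (is_derive_eq dM _)).
  apply: filterS (lt_nbhsl t0) => s s0 /=.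
  by rewrite Dn_neg // exprfctE.
rewrite !Dn_neg //= !exprfctE /=.
rewrite [_%:A]mulr1 /GRing.scale /=.
case: n {dX tn dV dM} => [|k].
  by rewrite !expr0 !mul0r !invr1 !mulr0 !mulr1 add0r subr0 mul1r.
rewrite /= -[t ^+ k.+2]/(t ^+ k.+2) !exprS.
field.
by rewrite expf_neq0.
Qed.

Lemma K_pos g g' n t : 0 < t ->
  is_derive t 1 (Dn n g) (Dn n g' t - n%:R * Dn n.+1 g t).
Proof.
move=> t0; rewrite !Dn_nneg ?ltW // mulr0 subr0.
apply: (near_eq_is_derive _ (is_derive_cst 0 t 1)).
apply: filterS (lt_nbhsr t0) => s s0 /=.
by rewrite Dn_nneg // ltW.
Qed.

Lemma K_zero g g' (n : nat) : flat g ->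
  is_derive (0:R) (1:R) (Dn n g) (Dn n g' 0 - n%:R * Dn n.+1 g 0).
Proof.
move=> fg; rewrite !Dn_nneg // mulr0 subr0.
have cv : (fun h : R => h^-1 *: ((Dn n g \o shift 0) (h *: (1:R)) - Dn n g 0)) @ 0^' --> (0:R).
  apply/cvgrPdist_le => e e0.
  have [dl dl0 Hdl] := fg n.+1 e e0.
  exists dl => //= h /= hdl hn0.
  rewrite sub0r normrN in hdl.
  rewrite [h%:A]mulr1 addr0 (Dn_nneg n g (lexx 0)) subr0 sub0r normrN.
  have [hneg|hpos] := ltrP h 0; last by rewrite Dn_nneg // /GRing.scale /= mulr0 normr0 ltW.
  rewrite Dn_neg // /GRing.scale /=.
  have ha : 0 < `|h| by rewrite normr_gt0.
  have := Hdl h _ hneg.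
  have hdl' : - dl < h by move: hdl; rewrite ltr_norml => /andP[].
  move=> /(_ hdl') H.
  rewrite normrM normfV normrM normfV normrX mulrCA -invfM -exprS.
  by rewrite ler_pdivrMr ?exprn_gt0.
apply: DeriveDef; first by apply/cvg_ex; exists 0.
exact: cvg_lim.
Qed.
Lemma K_all g g' : flat g -> (forall t, t < 0 -> is_derive t 1 g (g' t)) ->
  forall n t, is_derive t 1 (Dn n g) (Dn n g' t - n%:R * Dn n.+1 g t).
Proof.
move=> fg dg n t.
have [t0|t0] := ltrP t 0; first exact: (K_neg n t0 (dg t t0)).
move: t0; rewrite le_eqVlt => /orP[/eqP<-|t0]; first exact: (K_zero g' n fg).
exact: (K_pos g g' n t0).
Qed.

Definition Good (f : R -> R) := exists d, d 0%N = f /\ dseq d.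

Section Span.
Variables (I : Type) (B : I -> R -> R) (dB : I -> seq (R * I)).
Definition evL (L : seq (R * I)) (t : R) : R := \sum_(p <- L) p.1 * B p.2 t.
Definition dL (L : seq (R * I)) : seq (R * I) :=
  flatten [seq [seq (p.1 * q.1, q.2) | q <- dB p.2] | p <- L].
Hypothesis HB : forall i t, is_derive t 1 (B i) (evL (dB i) t).

Lemma evL_scale a s t : evL [seq (a * q.1, q.2) | q <- s] t = a * evL s t.
Proof.
rewrite /evL big_map mulr_sumr; apply: eq_bigr => q _ /=; by rewrite mulrA.
Qed.

Lemma is_derive_evL L t : is_derive t 1 (evL L) (evL (dL L) t).
Proof.
elim: L => [|p L IH].
  have -> : evL [::] = cst 0 by apply/funext => x; rewrite /evL big_nil.
  exact: is_derive_cst.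
have -> : evL (p :: L) = (p.1 *: B p.2) + evL L.
  by apply/funext => x; rewrite /evL big_cons.
have -> : evL (dL (p :: L)) t = p.1 *: evL (dB p.2) t + evL (dL L) t.
  by rewrite /dL /= /evL big_cat /= -/(evL _ _) evL_scale.
apply: is_deriveD => //; exact: is_deriveZ.
Qed.

Lemma Good_evL L : Good (evL L).
Proof.
exists (fun k => evL (iter k dL L)); split => // k x.
exact: is_derive_evL.
Qed.
End Span.
Lemma der_cont f (df : R -> R) : (forall x : R, is_derive x 1 f (df x)) -> continuous f.
Proof.
move=> H x; apply/differentiable_continuous/derivable1_diffP.
by case: (H x).
Qed.

Lemma MVT_step f df (r e : R) (i : nat) : (forall x : R, is_derive x 1 f (df x)) -> f 0 = 0 ->
  (forall y : R, - r < y -> y < 0 -> `|df y| <= e * `|y| ^+ i) ->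
  forall y : R, - r < y -> y < 0 -> `|f y| <= e * `|y| ^+ i.+1.
Proof.
move=> Hd f0 Hb y ry y0.
have [c cin Hc] := MVT y0 (fun x _ => Hd x) (continuous_subspaceT (der_cont Hd)).
move: cin; rewrite in_itv /= => /andP[yc c0].
move: Hc; rewrite f0 sub0r sub0r => /(congr1 (fun z => `|z|)); rewrite normrN => ->.
rewrite normrM normrN exprSr mulrA ler_pM2r ?normr_gt0 ?ltr0_neq0 //.
apply: (le_trans (Hb c (lt_trans ry yc) c0)).
have cp : 0 < `|c| ^+ i by rewrite exprn_gt0 // normr_gt0 ltr0_neq0.
have e0 : 0 <= e.
  rewrite -(pmulr_lge0 _ cp).
  exact: le_trans (normr_ge0 _) (Hb c (lt_trans ry yc) c0).
apply: ler_wpM2l => //; apply: lerXn2r; rewrite ?nnegrE ?normr_ge0 //.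
by rewrite !ltr0_norm // lerN2 ltW.
Qed.
Section DS.
Variables (d : nat -> R -> R) (hd : dseq d) (h0 : forall t, 0 <= t -> d 0%N t = 0).

Lemma ds_cont j : continuous (d j).
Proof. exact: der_cont (hd j). Qed.

Lemma ds_vanish j t : 0 <= t -> d j t = 0.
Proof.
elim: j t => [|j IH] t t0; first exact: h0.
have pos : forall t, 0 < t -> d j.+1 t = 0.
  move=> s s0.
  have H1 : is_derive s 1 (d j) 0.
    apply: (near_eq_is_derive _ (is_derive_cst 0 s 1)).
    by apply: filterS (lt_nbhsr s0) => u u0 /=; rewrite IH // ltW.
  by rewrite -(@derive_val _ _ _ _ _ _ _ (hd j s)) (@derive_val _ _ _ _ _ _ _ H1).
move: t0; rewrite le_eqVlt => /orP[/eqP<-|]; last exact: pos.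
apply/eqP/negPn/negP => hne.
have := @ds_cont j.+1 0 => /cvgrPdist_lt /(_ `|d j.+1 0|).
rewrite normr_gt0 => /(_ hne) [r r0 Hr].
have := Hr (r / 2) => /=.
rewrite sub0r normrN gtr0_norm ?divr_gt0 // => /(_ _).
rewrite ltr_pdivrMr // ltr_pMr // ltr1n => /(_ isT).
by rewrite (pos (r / 2)) ?divr_gt0 // subr0 ltxx.
Qed.

Lemma ds_flat j : flat (d j).
Proof.
move=> N e e0.
have := @ds_cont (N + j) 0 => /cvgrPdist_le /(_ e e0) [r r0 Hr].
exists r => //.
suff : forall i k, (forall y : R, - r < y -> y < 0 -> `|d (i + k)%N y| <= e) ->
    forall y : R, - r < y -> y < 0 -> `|d k y| <= e * `|y| ^+ i.
  apply => y ry y0; have := Hr y.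
  rewrite /= ds_vanish // sub0r normrN ltr0_norm // sub0r normrN => H; apply: H.
  by rewrite ltrNl.
elim => [|i IH] k Hb y ry y0; first by rewrite expr0 mulr1; exact: Hb.
apply: (MVT_step (hd k)) => //; first exact: ds_vanish.
apply: IH => z rz z0; rewrite -addSnnS; exact: Hb.
by [].
Qed.

Lemma Good_Dn n : Good (Dn n (d 0%N)).
Proof.
pose B := fun p : nat * nat => Dn p.1 (d p.2).
pose dB := fun p : nat * nat => [:: ((1:R), (p.1, p.2.+1)); (- (p.1)%:R, (p.1.+1, p.2))].
have HB : forall p t, is_derive t 1 (B p) (evL B (dB p) t).
  move=> [m k] t; rewrite /evL !big_cons big_nil /= addr0 mul1r mulNr.
  apply: (K_all (ds_flat k)) => s _; exact: hd.
have -> : Dn n (d 0%N) = evL B [:: (1, (n, 0%N))].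
  by apply/funext => t; rewrite /evL big_cons big_nil /= addr0 mul1r.
exact: Good_evL.
Qed.
End DS.
Definition E t : R := if t < 0 then expR (t^-1) else 0.

Lemma E_flat : flat E.
Proof.
move=> N e e0.
pose c : R := (N.+1)`!%:R.
have c0 : 0 < c by rewrite ltr0n fact_gt0.
exists (e / c); first by rewrite divr_gt0.
move=> h hd h0.
rewrite /E h0 ger0_norm ?expR_ge0 //.
have s0 : 0 < - h^-1 by rewrite oppr_gt0 invr_lt0.
have := expR_ge1Dxn N (ltW s0).
move=> Hs.
have Hs' : (- h^-1) ^+ N.+1 / c <= expR (- h^-1).
  by apply: le_trans Hs; rewrite lerDr.
rewrite -[h^-1]opprK expRN.
have ha : 0 < `|h| by rewrite normr_gt0 ltr0_neq0.
have hs : - h^-1 = `|h|^-1 by rewrite ltr0_norm // invrN.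
rewrite hs in Hs' *.
have p1 : 0 < `|h|^-1 ^+ N.+1 / c by rewrite divr_gt0 // exprn_gt0 // invr_gt0.
apply: (le_trans (y := (`|h|^-1 ^+ N.+1 / c)^-1)).
  by rewrite lef_pV2 ?posrE ?expR_gt0.
rewrite invfM invrK exprVn invrK exprS mulrAC ler_wpM2r ?exprn_ge0 ?normr_ge0 //.
rewrite mulrC -ler_pdivlMr //.
rewrite ltr0_norm // ler_pdivlMr ?oppr_gt0 // mulrC -ler_pdivlMr // lerNl; exact: ltW.
Qed.
Lemma E_der t : t < 0 -> is_derive t 1 E (- Dn 2 E t).
Proof.
move=> t0.
have tn0 : t != 0 by rewrite ltr0_neq0.
have dI := @is_deriveV _ (@idfun R) t 1 1 tn0 (is_derive_id _ _).
have dE := is_derive_expR (t^-1).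
have dC := is_derive1_comp dE dI.
apply: (near_eq_is_derive _ (is_derive_eq dC _)).
  by apply: filterS (lt_nbhsl t0) => s s0 /=; rewrite /E s0.
rewrite Dn_neg // /E t0 /GRing.scale /= mulr1.
by rewrite mulrN.
Qed.

Lemma Good_DnE n : Good (Dn n E).
Proof.
pose dB := fun p : nat => [:: ((-1:R), p.+2); (- p%:R, p.+1)].
have HB : forall p t, is_derive t 1 (Dn p E) (evL (Dn ^~ E) (dB p) t).
  move=> p t; rewrite /evL !big_cons big_nil /= addr0 mulN1r mulNr.
  apply: is_derive_eq; first exact: (K_all E_flat E_der).
  congr (_ - _); rewrite /Dn; case: ifP => t0; last by rewrite oppr0.
  rewrite /E t0 !exprS expr0 mulr1 mulNr -mulrA -invfM -!mulrA.
  by rewrite ?(mulrA t) ?mulrA.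
have -> : Dn n E = evL (Dn ^~ E) [:: (1, n)].
  by apply/funext => t; rewrite /evL big_cons big_nil /= addr0 mul1r.
exact: Good_evL.
Qed.

Lemma Good_E : Good E.
Proof.
have -> : E = Dn 0 E.
  by apply/funext => t; rewrite /Dn /E; case: ifP => // _; rewrite expr0 divr1.
exact: Good_DnE.
Qed.
Fixpoint DseqG (n : nat) (vs : seq 'rV[R]_n) (f : 'rV[R]_n -> R) : 'rV[R]_n -> R :=
  match vs with
  | [::] => f
  | v :: vs' => fun w => derive (@DseqG n vs' f : 'rV[R]_n -> R^o) w v
  end.
Definition smoothG (n : nat) (f : 'rV[R]_n -> R) : Prop :=
  forall vs : seq 'rV[R]_n,
    continuous (@DseqG n vs f : 'rV[R]_n -> R^o) /\
    forall v x, derivable (@DseqG n vs f : 'rV[R]_n -> R^o) x v.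

Section Expr.
Variable n : nat.

Lemma dir_1D (f : 'rV[R]_n -> R) (x u : 'rV[R]_n) (D : R) :
  is_derive (0:R) (1:R) (fun h : R => f (h *: u + x)) D -> is_derive x u (f : 'rV[R]_n -> R^o) D.
Proof.
move=> [d1 v1].
have EE : (fun h : R => h^-1 *: (((f : 'rV[R]_n -> R^o) \o shift x) (h *: u) - f x)) =
  (fun h : R => h^-1 *: (((fun h => f (h *: u + x)) \o shift 0) (h *: 1) - f (0 *: u + x))).
  by apply/funext => h /=; rewrite addr0 scale0r add0r [_%:A]mulr1.
have d2 : derivable (f : 'rV[R]_n -> R^o) x u by rewrite /derivable EE.
apply: DeriveDef => //.
by rewrite /derive EE -v1.
Qed.

Lemma D1_dir (f : 'rV[R]_n -> R) (x u : 'rV[R]_n) (D : R) :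
  is_derive x u (f : 'rV[R]_n -> R^o) D -> is_derive (0:R) (1:R) (fun h : R => f (h *: u + x)) D.
Proof.
move=> [d1 v1].
have EE : (fun h : R => h^-1 *: (((f : 'rV[R]_n -> R^o) \o shift x) (h *: u) - f x)) =
  (fun h : R => h^-1 *: (((fun h => f (h *: u + x)) \o shift 0) (h *: 1) - f (0 *: u + x))).
  by apply/funext => h /=; rewrite addr0 scale0r add0r [_%:A]mulr1.
have d2 : derivable (fun h : R => f (h *: u + x)) 0 1.
  by move: d1; rewrite /derivable EE.
apply: DeriveDef => //.
by move: v1; rewrite /derive EE.
Qed.

Lemma chain_dir (f : 'rV[R]_n -> R) (phi : R -> R) (x u : 'rV[R]_n) (D P : R) :
  is_derive x u (f : 'rV[R]_n -> R^o) D -> is_derive (f x) 1 phi P ->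
  is_derive x u ((fun z : 'rV[R]_n => phi (f z)) : 'rV[R]_n -> R^o) (P * D).
Proof.
move=> /D1_dir hf hp.
apply: dir_1D.
have EE : f x = (fun h : R => f (h *: u + x)) 0 by rewrite /= scale0r add0r.
rewrite EE in hp.
exact: (is_derive1_comp hp hf).
Qed.

Lemma proj_der (i : 'I_n) (x u : 'rV[R]_n) :
  is_derive x u ((fun y : 'rV[R]_n => y ord0 i) : 'rV[R]_n -> R^o) (u ord0 i).
Proof.
apply: dir_1D.
have -> : (fun h : R => (h *: u + x) ord0 i) = (fun h => h * u ord0 i + x ord0 i).
  by apply/funext => h; rewrite !mxE.
have := is_deriveD (is_deriveM (is_derive_id (0:R) (1:R)) (is_derive_cst (u ord0 i) (0:R) 1))
    (is_derive_cst (x ord0 i) (0:R) 1).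
by rewrite scaler0 add0r addr0 /cst [_%:A]mulr1.
Qed.

Inductive ex := XC of R | XP of 'I_n | XA of ex & ex | XM of ex & ex
  | XF of (nat -> R -> R) & nat & ex.

Fixpoint ev (e : ex) (z : 'rV[R]_n) : R :=
  match e with
  | XC r => r
  | XP i => z ord0 i
  | XA a b => ev a z + ev b z
  | XM a b => ev a z * ev b z
  | XF d k a => d k (ev a z)
  end.

Fixpoint wf (e : ex) : Prop :=
  match e with
  | XA a b | XM a b => wf a /\ wf b
  | XF d k a => dseq d /\ wf a
  | _ => True
  end.

Fixpoint dex (u : 'rV[R]_n) (e : ex) : ex :=
  match e with
  | XC _ => XC 0
  | XP i => XC (u ord0 i)
  | XA a b => XA (dex u a) (dex u b)
  | XM a b => XA (XM (dex u a) b) (XM a (dex u b))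
  | XF d k a => XM (XF d k.+1 a) (dex u a)
  end.

Lemma wf_dex u e : wf e -> wf (dex u e).
Proof.
elim: e => //= [a IHa b IHb [/IHa ? /IHb ?]|a IHa b IHb [ha hb]|d k a IHa [hd /IHa ?]] //.
by split; split => //; [apply: IHa|apply: IHb].
Qed.

Lemma ev_cont e : wf e -> continuous (ev e : 'rV[R]_n -> R^o).
Proof.
elim: e => /= [r _|i _|a IHa b IHb [/IHa ha /IHb hb]|a IHa b IHb [/IHa ha /IHb hb]|d k a IHa [hd /IHa ha]] z.
- exact: cst_continuous.
- exact: coord_continuous.
- exact: (continuousD (ha z) (hb z)).
- exact: (continuousM (ha z) (hb z)).
- apply: (continuous_comp (f := ev a) (g := d k)); first exact: ha.
  exact: (@der_cont (d k) (d k.+1) (hd k)).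
Qed.

Lemma ev_der e (x u : 'rV[R]_n) : wf e -> is_derive x u (ev e : 'rV[R]_n -> R^o) (ev (dex u e) x).
Proof.
elim: e => /= [r _|i _|a IHa b IHb [/IHa ha /IHb hb]|a IHa b IHb [/IHa ha /IHb hb]|d k a IHa [hd /IHa ha]].
- exact: (is_derive_cst r x u).
- exact: proj_der.
- exact: is_deriveD.
- have := is_deriveM ha hb => H. apply: (is_derive_eq H).
  by rewrite /GRing.scale /= addrC mulrC; congr (_ + _); rewrite mulrC.

- exact: chain_dir.
Qed.

Fixpoint dexs (vs : seq 'rV[R]_n) (e : ex) : ex :=
  match vs with [::] => e | v :: vs' => dex v (dexs vs' e) end.

Lemma wf_dexs vs e : wf e -> wf (dexs vs e).
Proof. by elim: vs => //= v vs IH /IH; apply: wf_dex. Qed.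

Lemma DseqG_ev vs e : wf e -> DseqG vs (ev e) = ev (dexs vs e).
Proof.
move=> we; elim: vs => //= v vs ->.
apply/funext => x.
by have [_ ->] := ev_der x v (wf_dexs vs we).
Qed.

Lemma smoothG_ev e : wf e -> smoothG (ev e).
Proof.
move=> we vs; rewrite DseqG_ev //; split; first exact/ev_cont/wf_dexs.
by move=> v x; have [] := ev_der x v (wf_dexs vs we).
Qed.
End Expr.
Definition rw (t : R) : 'rV[R]_1 := const_mx t.
Definition e1 : 'rV[R]_1 := const_mx 1.

Lemma bridge (F : 'rV[R]_1 -> R) (c : R) : smoothG F ->
  dseq (fun k t => DseqG (nseq k e1) F (rw (t + c))).
Proof.
move=> sF k t; have [_ hd] := sF (nseq k e1).
set G := DseqG (nseq k e1) F.
rewrite /=. rewrite -/G.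
have EE : (fun h : R => h^-1 *: (((fun s => G (rw (s + c))) \o shift t) (h *: 1) - G (rw (t + c)))) =
  (fun h : R => h^-1 *: (((G : 'rV[R]_1 -> R^o) \o shift (rw (t + c))) (h *: e1) - G (rw (t + c)))).
  apply/funext => h /=; congr (_ *: (G _ - _)).
  by apply/matrixP => i j; rewrite !mxE addrA.
apply: DeriveDef; first by rewrite /derivable EE; exact: hd.
by rewrite /derive EE.
Qed.

Lemma rw_proj (x : 'rV[R]_1) : x = rw (x ord0 ord0).
Proof. by apply/matrixP => i j; rewrite !mxE !ord1. Qed.
Definition prodX (m : nat) : ex m := \big[@XM m/XC m 1]_(i < m) XP i.

Lemma ev_prodX m (v : 'rV[R]_m) : ev (prodX m) v = \prod_(i < m) v ord0 i.
Proof. by rewrite /prodX; elim/big_rec2: _ => //= i e r _ ->. Qed.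

Lemma wf_prodX m : wf (prodX m).
Proof. by rewrite /prodX; elim/big_rec: _ => //= i e _ ->. Qed.
End OneD.

Lemma DseqE n vs (f : 'rV[RR]_n -> RR) : Dseq vs f = @DseqG RR n vs f.
Proof. by elim: vs => [|v vs IH] //=; rewrite IH. Qed.

Lemma smoothE n (f : 'rV[RR]_n -> RR) : smooth f <-> smoothG f.
Proof.
rewrite /smooth /smoothG; split=> H vs; have := H vs; by rewrite DseqE.
Qed.

Lemma smooth_ev n (e : ex RR n) : wf e -> smooth (ev e).
Proof. by move=> we; apply/smoothE/smoothG_ev. Qed.

Section Alg.
Variable W : CinfRing.

Lemma I0_fun (T : Type) (f g : 'I_0 -> T) : f = g.
Proof. by apply/funext => -[i hi]. Qed.

Lemma smooth_cst n (c : RR) : smooth (fun _ : 'rV[RR]_n => c).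
Proof. exact: (smooth_ev (e := XC n c)). Qed.

Lemma const_op n (c : RR) (ws : 'I_n -> W) :
  cr_op (fun _ : 'rV[RR]_n => c) ws = cr_op (fun _ : 'rV[RR]_0 => c) (noargs W).
Proof.
have := @cr_comp W 0 n (fun _ => c) (fun _ _ => 0) ws (smooth_cst c) (fun _ => smooth_cst 0).
move=> /= ->; congr cr_op; exact: I0_fun.
Qed.

Lemma zeroA_op n (ws : 'I_n -> W) : cr_op (fun _ : 'rV[RR]_n => 0) ws = zeroA W.
Proof. by rewrite const_op. Qed.
End Alg.

Lemma factor (W : CinfRing) (m : nat) (gs : 'I_m -> 'rV[RR]_1 -> RR) (f : 'rV[RR]_1 -> RR)
  (ws : 'I_1 -> W) :
  (forall i, smooth (gs i)) -> (forall x, f x = \prod_(i < m) gs i x) ->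
  cr_op f ws = prodA (fun i => cr_op (gs i) ws).
Proof.
move=> sg fE.
pose Pm := fun v : 'rV[RR]_m => \prod_(i < m) v ord0 i.
have -> : f = fun x => Pm (\row_j gs j x).
  by apply/funext => x; rewrite fE; apply: eq_bigr => i _; rewrite mxE.
rewrite (@cr_comp W m 1 Pm gs ws) //.
have -> : Pm = ev (prodX RR m).
  by apply/funext => v; rewrite ev_prodX.
exact/smooth_ev/wf_prodX.
Qed.

Lemma hom_comp (A B C : CinfRing) (phi : A -> B) (psi : B -> C) :
  is_cinf_hom phi -> is_cinf_hom psi -> is_cinf_hom (psi \o phi).
Proof. by move=> h1 h2 n f xs sf /=; rewrite h1 // h2. Qed.

Lemma hom_zero (A B : CinfRing) (phi : A -> B) : is_cinf_hom phi -> phi (zeroA A) = zeroA B.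
Proof.
move=> h; rewrite /zeroA h; last exact: smooth_cst.
congr cr_op; exact: I0_fun.
Qed.

Lemma point_zero (A : CinfRing) (p : A -> RR) : is_point p -> p (zeroA A) = 0.
Proof. by move=> h; rewrite /zeroA h //; exact: smooth_cst. Qed.

Unset Implicit Arguments.
(* A morphism v : Spec A -> R = Spec C^oo(R) is a C^oo-hom C^oo(R) -> A, i.e.
   (C^oo(R) free on one generator) an element a of A, v^* f = f(a).
   v factors through H = Spec (C^oo(R)/I) iff v^* kills I.
   Gamma v sends a point p of Spec A to p(a). *)
Theorem corollary5p4 (A : CinfRing) (a : A) :
  in_CW A ->
  ((forall f : 'rV[RR]_1 -> RR, smooth f ->
      (forall x : 'rV[RR]_1, 0 <= x ord0 ord0 -> f x = 0) ->
      cr_op f (fun _ : 'I_1 => a) = zeroA A)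
   <->
   (forall p : A -> RR, is_point p -> 0 <= p a)).
Proof.
move=> [_ [_ [_ wdet]]]; split.
  move=> H p hp; rewrite leNgt; apply/negP => pa0.
  have [dE [dE0 hdE]] := @Good_E RR.
  pose f := fun x : 'rV[RR]_1 => dE 0%N (x ord0 ord0).
  have sf : smooth f.
    have -> : f = ev (@XF RR 1 dE 0 (@XP RR 1 ord0)) by [].
    exact: smooth_ev.
  have vf : forall x : 'rV[RR]_1, 0 <= x ord0 ord0 -> f x = 0.
    by move=> x hx; rewrite /f dE0 /E ltNge hx.
  have := H f sf vf => /(congr1 p).
  rewrite point_zero // hp //= /f mxE dE0 /E pa0 => /eqP.
  by rewrite expR_eq0.
move=> H f sf vf; apply: wdet => W phi hW hphi.
rewrite hom_zero // hphi //=.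
move: hW => [_ [eps [heps [m Hm]]]].
have c0 : 0 <= eps (phi a) := H _ (hom_comp hphi heps).
set c := eps (phi a) in c0.
set ws := (fun _ : 'I_1 => phi a).
case: m Hm => [|k] Hm.
  have Z1 : cr_op (fun _ : 'rV[RR]_0 => 1) (noargs W) = zeroA W.
    rewrite -(Hm (noargs W)); last by case.
    by rewrite /prodA; congr cr_op; apply/funext => v; rewrite big_ord0.
  pose i0 : 'I_2 := ord0.
  pose i1 : 'I_2 := lift ord0 ord0.
  pose Q := fun v : 'rV[RR]_2 => v ord0 i0 * v ord0 i1.
  have sQ : smooth Q.
    have -> : Q = ev (@XM RR 2 (@XP RR 2 i0) (@XP RR 2 i1)) by [].
    exact: smooth_ev.
  pose hs := fun j : 'I_2 => if j == i0 then f else (fun _ : 'rV[RR]_1 => 1).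
  pose hs' := fun j : 'I_2 => if j == i0 then f else (fun _ : 'rV[RR]_1 => 0).
  have shs : forall j, smooth (hs j).
    by move=> j; rewrite /hs; case: ifP => _ //; exact: smooth_cst.
  have shs' : forall j, smooth (hs' j).
    by move=> j; rewrite /hs'; case: ifP => _ //; exact: smooth_cst.
  have -> : f = fun x => Q (\row_j hs j x).
    by apply/funext => x; rewrite /Q !mxE /hs /= mulr1.
  rewrite (@cr_comp W 2 1 Q hs ws) //.
  have -> : (fun j => cr_op (hs j) ws) = (fun j => cr_op (hs' j) ws).
    apply/funext => j; rewrite /hs /hs'; case: ifP => // _.
    by rewrite const_op Z1 zeroA_op.
  rewrite -(@cr_comp W 2 1 Q hs' ws) //.
  have -> : (fun x => Q (\row_j hs' j x)) = (fun _ : 'rV[RR]_1 => 0).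
    by apply/funext => x; rewrite /Q !mxE /hs' /= mulr0.
  exact: zeroA_op.
pose d := fun (j : nat) (t : RR) => DseqG (nseq j (e1 RR)) f (rw (t + c)).
have hd : dseq d := bridge c ((smoothE f).1 sf).
have h0 : forall t : RR, 0 <= t -> d 0%N t = 0.
  by move=> t t0; rewrite /d /= vf // /rw mxE addr_ge0.
have [dp [dp0 hdp]] := Good_Dn hd h0 k.
pose gs := fun i : 'I_k.+1 => if i == ord0 then (fun x : 'rV[RR]_1 => dp 0%N (x ord0 ord0 + - c))
  else (fun x : 'rV[RR]_1 => x ord0 ord0 + - c).
have sgs : forall i, smooth (gs i).
  move=> i; rewrite /gs; case: ifP => _.
    have -> : (fun x : 'rV[RR]_1 => dp 0%N (x ord0 ord0 + - c)) =
      ev (@XF RR 1 dp 0 (@XA RR 1 (@XP RR 1 ord0) (@XC RR 1 (- c)))) by [].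
    exact: smooth_ev.
  have -> : (fun x : 'rV[RR]_1 => x ord0 ord0 + - c) =
    ev (@XA RR 1 (@XP RR 1 ord0) (@XC RR 1 (- c))) by [].
  exact: smooth_ev.
rewrite (@factor W k.+1 gs f ws sgs).
  apply: Hm => i.
  rewrite heps // /ws /gs; case: ifP => _ /=; rewrite mxE -/c subrr // dp0 Dn_nneg //.

move=> x; rewrite big_ord_recl /= prodr_const card_ord.
rewrite /gs eqxx dp0 /Dn; case: ifP => t0.
  rewrite mulfVK ?expf_neq0 ?ltr0_neq0 // /d /= subrK.
  by rewrite -rw_proj.
rewrite mul0r vf //.
have -> : x ord0 ord0 = (x ord0 ord0 - c) + c by rewrite subrK.
by rewrite addr_ge0 // leNgt t0.
Qed.
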